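(* Every almost bipartite cubic graph is $3$-edge-colourable.
   Context: A cubic graph $G$ (multiple edges and loops permitted) is almost bipartite if it is bridgeless, not bipartite, and contains two edges $e$ and $f$ such that $G-\{e,f\}$ is bipartite. A $3$-edge-colouring is a proper edge colouring with three colours. *)

(* Defs.v *)
From mathcomp Require Import all_boot.
Set Implicit Arguments. Unset Strict Implicit. Unset Printing Implicit Defensive.

(* A multigraph is given by a finite vertex type V, a finite edge type E and
   an endpoint map ends : E -> V * V (the order of the pair is irrelevant;
   a loop is an edge e with (ends e).1 = (ends e).2). *)
Section MultiGraph.
Variables (V E : finType) (ends : E -> V * V).

Definition incident (e : E) (v : V) : bool :=
  ((ends e).1 == v) || ((ends e).2 == v).

Definition is_loop (e : E) : bool := (ends e).1 == (ends e).2.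

(* degree, loops counted twice *)
Definition degree (v : V) : nat :=
  #|[set e | (ends e).1 == v]| + #|[set e | (ends e).2 == v]|.

Definition cubic : Prop := forall v, degree v = 3.

Definition adj_minus (F : {set E}) : rel V :=
  fun u v => [exists e, (e \notin F) &&
                 ((ends e == (u, v)) || (ends e == (v, u)))].

Definition bridge (e : E) : Prop :=
  exists u v, connect (adj_minus set0) u v /\ ~~ connect (adj_minus [set e]) u v.

Definition bridgeless : Prop := forall e, ~ bridge e.

Definition bipartite_minus (F : {set E}) : Prop :=
  exists c : V -> bool, forall e, e \notin F -> c (ends e).1 != c (ends e).2.

Definition bipartite : Prop := bipartite_minus set0.

Definition almost_bipartite : Prop :=
  [/\ bridgeless, ~ bipartite &
      exists e f : E, e != f /\ bipartite_minus [set e; f]].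

Definition proper_edge_colouring (k : nat) (col : E -> 'I_k) : Prop :=
  (forall e, ~~ is_loop e) /\
  (forall e f v, e != f -> incident e v -> incident f v -> col e != col f).

Definition three_edge_colourable : Prop :=
  exists col : E -> 'I_3, proper_edge_colouring col.

End MultiGraph.

(* Main.v *)
Require Import Defs.
From mathcomp Require Import all_boot zify.
Set Implicit Arguments. Unset Strict Implicit. Unset Printing Implicit Defensive.

Section Hall.
Variables (A B : finType) (b0 : B).
Definition nbh (r : A -> B -> bool) (S : {set A}) : {set B} :=
  [set b | [exists a in S, r a b]].

Lemma nbhU r S1 S2 : nbh r (S1 :|: S2) = nbh r S1 :|: nbh r S2.
Proof.
apply/setP => b; rewrite !inE; apply/existsP/orP.
- by case=> a /andP[]; rewrite inE => /orP[] Ha Hr; [left|right];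
     apply/existsP; exists a; rewrite Ha.
- by case=> /existsP[a /andP[Ha Hr]]; exists a; rewrite inE Ha ?orbT.
Qed.

Lemma hall_gen n : forall (r : A -> B -> bool) (SA : {set A}), #|SA| <= n ->
  (forall S : {set A}, S \subset SA -> #|S| <= #|nbh r S|) ->
  exists f : A -> B, {in SA &, injective f} /\ {in SA, forall a, r a (f a)}.
Proof.
elim: n => [|n IH] r SA szA hallA.
  have SA0 : SA = set0 by apply: cards0_eq; lia.
  by exists (fun _ => b0); split => a; rewrite SA0 inE.
case: (boolP [exists S : {set A}, [&& S != set0, S \proper SA & #|nbh r S| <= #|S|]]).
- case/existsP => S /and3P[S0 SprA SN].
  have SsubA : S \subset SA by apply: proper_sub.
  have ltS := proper_card SprA.
  have [f1 [inj1 r1]] : exists f : A -> B, {in S &, injective f} /\ {in S, forall a, r a (f a)}.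
    apply: IH; first lia.
    by move=> S' HS'; apply: hallA; apply: subset_trans SsubA.
  set NS := nbh r S.
  have eqNS : #|NS| = #|S| by apply/eqP; rewrite eqn_leq SN hallA.
  set r2 := fun a b => r a b && (b \notin NS).
  have [f2 [inj2 r2f]] : exists f : A -> B, {in SA :\: S &, injective f} /\
      {in SA :\: S, forall a, r2 a (f a)}.
    apply: IH.
      have : #|S| != 0 by rewrite cards_eq0.
      move: (cardsID S SA); rewrite (setIidPr SsubA); lia.
    move=> S' HS'.
    have disj : S' :&: S = set0.
      apply/setP => a; rewrite !inE; apply/negbTE; apply/andP => [[H1 H2]].
      by move/subsetP: HS' => /(_ a H1); rewrite !inE H2.
    have HU : S' :|: S \subset SA.
      rewrite subUset SsubA andbT; apply: subset_trans HS' _; apply: subsetDl.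
    have h1 := hallA _ HU.
    rewrite nbhU cardsU disj cards0 subn0 -/NS in h1.
    have -> : nbh r2 S' = nbh r S' :\: NS.
      apply/setP => b; rewrite !inE; apply/existsP/andP.
      - case=> a /andP[Ha /andP[Hr Hn]]; split; first by move: Hn; rewrite inE.
        by apply/existsP; exists a; rewrite Ha.
      - by case=> Hn /existsP[a /andP[Ha Hr]]; exists a; rewrite Ha /r2 Hr; by rewrite inE.
    rewrite cardsD.
    move: (cardsU (nbh r S') NS). rewrite eqNS. lia.
  exists (fun a => if a \in S then f1 a else f2 a); split.
  + move=> a a' Ha Ha'; case: ifP => HaS; case: ifP => Ha'S.
    * exact: inj1.
    * move=> E. have : r2 a' (f2 a') by apply: r2f; rewrite inE Ha' Ha'S.
      rewrite /r2 -E => /andP[_]; rewrite inE; case/negP.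
      by apply/existsP; exists a; rewrite HaS r1.
    * move=> E. have : r2 a (f2 a) by apply: r2f; rewrite inE Ha HaS.
      rewrite /r2 E => /andP[_]; rewrite inE; case/negP.
      by apply/existsP; exists a'; rewrite Ha'S r1.
    * by apply: inj2; rewrite inE ?HaS ?Ha'S ?Ha ?Ha'.
  + move=> a Ha; case: ifP => HaS; first exact: r1.
    by have /andP[] : r2 a (f2 a) by apply: r2f; rewrite inE Ha HaS.
- move=> Hn.
  have Hst : forall S, S != set0 -> S \proper SA -> #|S| < #|nbh r S|.
    move=> S H1 H2; rewrite ltnNge; apply/negP => H3; case/negP: Hn.
    by apply/existsP; exists S; rewrite H1 H2 H3.
  case: (set_0Vmem SA) => [SA0|[a0 Ha0]].
    by exists (fun _ => b0); split => a; rewrite SA0 inE.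
  have : 0 < #|nbh r [set a0]|.
    by apply: leq_trans (hallA _ _); rewrite ?cards1 // sub1set.
  case/card_gt0P => b1; rewrite inE => /existsP[z /andP[]]; rewrite inE => /eqP-> Hb1; clear z.
  set r' := fun a b => r a b && (b != b1).
  have [f' [inj' rf']] : exists f : A -> B, {in SA :\ a0 &, injective f} /\
      {in SA :\ a0, forall a, r' a (f a)}.
    apply: IH; first by move: (cardsD1 a0 SA); rewrite Ha0; lia.
    move=> S' HS'.
    case: (set_0Vmem S') => [->|[a1 Ha1]]; first by rewrite cards0.
    have : #|S'| < #|nbh r S'|.
      apply: Hst; first by apply/set0Pn; exists a1.
      rewrite properE (subset_trans HS' (subsetDl _ _)) /=.
      apply/subsetPn; exists a0 => //; apply/negP => /(subsetP HS'); rewrite !inE eqxx.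
      by [].
    have -> : nbh r' S' = nbh r S' :\ b1.
      apply/setP => b; rewrite !inE; apply/existsP/andP.
      - case=> x /andP[Ha /andP[Hr Hn']]; split => //.
        by apply/existsP; exists x; rewrite Ha.
      - by case=> Hn' /existsP[x /andP[Ha Hr]]; exists x; rewrite Ha /r' Hr.
    move: (cardsD1 b1 (nbh r S')); case: (b1 \in _); lia.
  exists (fun a => if a == a0 then b1 else f' a); split.
  + move=> a a' Ha Ha'; case: eqP => HaS; case: eqP => Ha'S.
    * by rewrite HaS Ha'S.
    * move=> E. have : r' a' (f' a') by apply: rf'; rewrite !inE Ha' andbT; apply/eqP.
      by rewrite /r' -E eqxx andbF.
    * move=> E. have : r' a (f' a) by apply: rf'; rewrite !inE Ha andbT; apply/eqP.
      by rewrite /r' E eqxx andbF.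
    * by apply: inj'; rewrite !inE ?Ha ?Ha' andbT; apply/eqP.
  + move=> a Ha; case: eqP => [->//|HaS].
    by have /andP[] : r' a (f' a) by apply: rf'; rewrite !inE Ha andbT; apply/eqP.
Qed.
End Hall.

Lemma connect_last (T : finType) (st : rel T) x y :
  connect st x y -> y = x \/ exists z, connect st x z /\ st z y.
Proof.
case/connectP => p; elim/last_ind: p => [|q z _] /=; first by move=> _ ->; left.
rewrite rcons_path last_rcons => /andP[Hq Hz] ->; right; exists (last x q); split => //.
by apply/connectP; exists q.
Qed.

Section Konig.
Variables (V E : finType) (ends : E -> V * V) (c : V -> bool).

Definition bip_on (S : {set E}) := forall g, g \in S -> c (ends g).1 != c (ends g).2.
Definition proper_on k (S : {set E}) (col : E -> 'I_k) :=
  forall g h v, g \in S -> h \in S -> g != h -> incident ends g v ->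
    incident ends h v -> col g != col h.

Lemma konig k : forall n (S : {set E}), #|S| <= n -> bip_on S ->
  (forall v, #|[set g in S | incident ends g v]| <= k.+1) ->
  exists col : E -> 'I_k.+1, proper_on S col.
Proof.
elim => [|n IH] S szS bS degS.
  have S0 : S = set0 by apply: cards0_eq; lia.
  by exists (fun _ => ord0) => g h v; rewrite S0 inE.
case: (set_0Vmem S) => [S0|[g gS]].
  by exists (fun _ => ord0) => g h v; rewrite S0 inE.
set S0 := S :\ g.
have [col0 pr0] : exists col : E -> 'I_k.+1, proper_on S0 col.
  apply: IH.
  - move: (cardsD1 g S); rewrite gS -/S0; lia.
  - by move=> h; rewrite !inE => /andP[_ /bS].
  - move=> v; apply: leq_trans (degS v); apply: subset_leq_card; apply/subsetP => h; rewrite !inE.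
    by case/andP => /andP[_ ->] ->.
have miss : forall x, incident ends g x -> exists a : 'I_k.+1,
    forall h, h \in S0 -> incident ends h x -> col0 h != a.
  move=> x gx.
  set I := [set h in S0 | incident ends h x].
  have cI : #|I| <= k.
    have : #|g |: I| <= k.+1.
      apply: leq_trans (degS x); apply: subset_leq_card; apply/subsetP => h; rewrite !inE.
      by case/orP => [/eqP->|/andP[/andP[_ ->] ->]]; rewrite ?gS ?gx.
    rewrite cardsU1 !inE eqxx /=; lia.
  case: (pickP [pred a | a \notin col0 @: I]) => [a Ha|H].
    exists a => h hS hx; apply/eqP => Eq; move: Ha => /=; rewrite -Eq.
    by case/negP; apply: imset_f; rewrite in_set hS hx.
  have : #|[set: 'I_k.+1]| <= #|col0 @: I|.
    apply: subset_leq_card; apply/subsetP => a _; move: (H a) => /= /negbFE.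
    by [].
  rewrite cardsT card_ord => H2; have := leq_imset_card col0 I; lia.
have gu : incident ends g (ends g).1 by rewrite /incident eqxx.
have gw : incident ends g (ends g).2 by rewrite /incident eqxx orbT.
have [al Hal] := miss _ gu.
have [be Hbe] := miss _ gw.
have cuw := bS g gS.
move: gu gw Hal Hbe cuw.
set u := (ends g).1; set w := (ends g).2 => gu gw Hal Hbe cuw.
have bS0 : forall h, h \in S0 -> c (ends h).1 != c (ends h).2.
  by move=> h; rewrite !inE => /andP[_ /bS].
pose Hedge h := (h \in S0) && ((col0 h == al) || (col0 h == be)).
pose ori h := (c (ends h).1 == c w) == (col0 h == al).
pose tl h := if ori h then (ends h).1 else (ends h).2.
pose hd h := if ori h then (ends h).2 else (ends h).1.
pose step := [rel x y | [exists h, [&& Hedge h, tl h == x & hd h == y]]].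
pose K := [set y | connect step w y].
pose swap (a : 'I_k.+1) := if a == al then be else if a == be then al else a.
pose col' h := if h == g then al else if Hedge h && (tl h \in K) then swap (col0 h) else col0 h.
have Fside : forall h, h \in S0 -> ((c (tl h) == c w) = (col0 h == al)) /\
    ((c (hd h) == c w) = (col0 h != al)).
  move=> h /bS0; rewrite /tl /hd /ori.
  case Eo: ((c (ends h).1 == c w) == (col0 h == al)); move: Eo;
  by case: (col0 h == al); case: (c (ends h).1); case: (c (ends h).2); case: (c w).
have Finc : forall h y, incident ends h y = (tl h == y) || (hd h == y).
  by move=> h y; rewrite /incident /tl /hd; case: (ori h); rewrite // orbC.
have F1 : forall h h', Hedge h -> Hedge h' -> hd h = hd h' -> h = h'.
  move=> h h' /andP[hS hc] /andP[hS' hc'] Ehd; apply/eqP; apply/negPn/negP => nhh.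
  have := pr0 h h' (hd h) hS hS' nhh; rewrite !Finc Ehd eqxx !orbT => /(_ isT isT).
  have [_ E1] := Fside h hS; have [_ E2] := Fside h' hS'.
  rewrite -Ehd E1 in E2.
  suff Ecol : col0 h = col0 h' by rewrite Ecol eqxx.
  move: hc hc' E2; case/orP => /eqP H1; case/orP => /eqP H2; rewrite H1 H2 // eqxx /=.
    by move=> /esym /negbFE /eqP.
  by move=> /negbFE /eqP.
have F2 : forall x, ~~ step x w.
  move=> x; apply/negP => /existsP[h /and3P[/andP[hS hc] _ /eqP hw]].
  have [_ E1] := Fside h hS; rewrite hw eqxx in E1.
  have := Hbe h hS; rewrite Finc hw eqxx orbT => /(_ isT).
  move=> Hb; move: hc; rewrite (negbTE Hb) orbF => /eqP Ha.
  by rewrite Ha eqxx in E1.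
have F3 : forall x, ~~ step x u.
  move=> x; apply/negP => /existsP[h /and3P[/andP[hS hc] _ /eqP hu]].
  have [_ E1] := Fside h hS; rewrite hu in E1.
  have := Hal h hS; rewrite Finc hu eqxx orbT => /(_ isT).
  move: E1 cuw; rewrite -/u -/w.
  by case: (c u); case: (c w); case: (col0 h == al).
have wK : w \in K by rewrite inE connect0.
have uK : u \notin K.
  rewrite inE; apply/negP => /connect_last [Euw|[z [_ Hz]]].
    by move: cuw; rewrite -/u -/w Euw eqxx.
  exact: (negP (F3 z) Hz).
have F5 : forall h y, Hedge h -> incident ends h y -> (tl h \in K) = (y \in K).
  move=> h y hH; rewrite Finc => /orP[/eqP<-//|/eqP<-].
  rewrite !inE; apply/idP/idP => [Ht|].
    apply: connect_trans Ht _; apply: connect1; apply/existsP; exists h.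
    by rewrite hH !eqxx.
  case/connect_last => [Ew|[z [Hz /existsP[h' /and3P[hH' /eqP Ht' /eqP Hh']]]]].
    by move: (F2 (tl h)); rewrite -Ew; case/negP; apply/existsP; exists h; rewrite hH !eqxx.
  by rewrite -(F1 _ _ hH' hH Hh') Ht'.
have swapK : forall a, swap (swap a) = a.
  move=> a; rewrite /swap.
  case: (a =P al) => [->|Ha].
    by case: (be =P al) => [->|_]; rewrite ?eqxx.
  case: (a =P be) => [->|Hb]; first by rewrite eqxx.
  by case: (a =P al) => //; case: (a =P be).
have swapid : forall a, a != al -> a != be -> swap a = a.
  by move=> a /negbTE H1 /negbTE H2; rewrite /swap H1 H2.
have colS0 : forall h v, h \in S0 -> incident ends h v ->
    col' h = if v \in K then swap (col0 h) else col0 h.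
  move=> h v hS hv; have hg : (h == g) = false by move: hS; rewrite !inE => /andP[/negbTE].
  rewrite /col' hg; case hH: (Hedge h).
    by rewrite (F5 _ _ hH hv).
  move: hH; rewrite /Hedge hS /= => /norP[H1 H2].
  by rewrite swapid //; case: ifP.
exists col' => h1 h2 v h1S h2S n12 h1v h2v.
have key : forall h x, h \in S0 -> incident ends g x -> incident ends h x -> col' h != al.
  move=> h x hS gx hx; rewrite (colS0 _ _ hS hx).
  move: gx; rewrite /incident -/u -/w => /orP[/eqP Ex|/eqP Ex]; subst x.
    by rewrite (negbTE uK); apply: Hal.
  rewrite wK; apply/eqP => Es.
  have := Hbe h hS hx; rewrite -(swapK (col0 h)) Es /swap eqxx eqxx.
  by [].
have inS0 : forall h, h \in S -> h != g -> h \in S0.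
  by move=> h hS hg; rewrite !inE hS hg.
case: (h1 =P g) => [E1|N1].
  subst h1; rewrite eq_sym in n12.
  have := key h2 v (inS0 _ h2S n12) h1v h2v.
  by rewrite /col' eqxx eq_sym (negbTE n12).
case: (h2 =P g) => [E2|N2].
  subst h2.
  have := key h1 v (inS0 _ h1S (introN eqP N1)) h2v h1v.
  by rewrite /col' eqxx eq_sym.
have h1S0 := inS0 _ h1S (introN eqP N1).
have h2S0 := inS0 _ h2S (introN eqP N2).
rewrite (colS0 _ _ h1S0 h1v) (colS0 _ _ h2S0 h2v).
have := pr0 _ _ _ h1S0 h2S0 n12 h1v h2v.
case: (v \in K) => //.
by apply: contra => /eqP /(f_equal swap); rewrite !swapK => ->.
Qed.
End Konig.

Lemma card_ge2 (T : finType) (A : {set T}) x y :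
  x \in A -> y \in A -> x != y -> 1 < #|A|.
Proof.
move=> xA yA nxy; rewrite (cardsD1 x) xA (cardsD1 y) !inE yA eq_sym nxy /=; lia.
Qed.

Lemma card_ge3 (T : finType) (A : {set T}) x y z :
  x \in A -> y \in A -> z \in A -> x != y -> x != z -> y != z -> 2 < #|A|.
Proof.
move=> xA yA zA nxy nxz nyz.
rewrite (cardsD1 x) xA (cardsD1 y) !inE yA eq_sym nxy (cardsD1 z) !inE zA.
rewrite (eq_sym z y) nyz (eq_sym z x) nxz /=; lia.
Qed.

Section Graph.
Variables (V E : finType) (ends : E -> V * V).

Lemma card_set_sum (P : pred E) : #|[set g | P g]| = \sum_g (P g : nat).
Proof.
rewrite -sum1_card big_mkcond /=; apply: eq_bigr => g _; rewrite inE; by case: (P g).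
Qed.

Lemma card_set_sum2 (P Q : pred E) :
  #|[set g | P g && Q g]| = \sum_(g | P g) (Q g : nat).
Proof.
rewrite card_set_sum [RHS]big_mkcond /=; apply: eq_bigr => g _; by case: (P g).
Qed.

Lemma sum_eq1 (X : {set V}) x : \sum_(v in X) ((x == v) : nat) = (x \in X).
Proof.
rewrite big_mkcond (bigD1 x) //= eqxx big1 ?addn0; first by case: (x \in X).
by move=> v; rewrite eq_sym => /negbTE ->; case: (v \in X).
Qed.

Lemma handshake (X : {set V}) : \sum_(v in X) degree ends v =
  \sum_g (((ends g).1 \in X) + ((ends g).2 \in X)).
Proof.
rewrite /degree big_split [RHS]big_split /=; congr (_ + _).
- rewrite (eq_bigr (fun v => \sum_g (((ends g).1 == v) : nat))) => [|v _].
    by rewrite exchange_big; apply: eq_bigr => g _; exact: sum_eq1.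
  exact: (card_set_sum (fun g => (ends g).1 == v)).
- rewrite (eq_bigr (fun v => \sum_g (((ends g).2 == v) : nat))) => [|v _].
    by rewrite exchange_big; apply: eq_bigr => g _; exact: sum_eq1.
  exact: (card_set_sum (fun g => (ends g).2 == v)).
Qed.

Lemma cubic_sum (X : {set V}) : cubic ends ->
  \sum_g (((ends g).1 \in X) + ((ends g).2 \in X)) = 3 * #|X|.
Proof.
move=> cub; rewrite -handshake (eq_bigr (fun _ => 3)); last by move=> v _; exact: cub.
by rewrite sum_nat_const mulnC.
Qed.

Lemma card_incident v : #|[set g | incident ends g v]| <= degree ends v.
Proof.
have -> : [set g | incident ends g v] =
    [set g | (ends g).1 == v] :|: [set g | (ends g).2 == v].
  by apply/setP => g; rewrite !inE.
by rewrite cardsU leq_subr.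
Qed.

Lemma sum_split_ef (F : E -> nat) e f : e != f ->
  \sum_g F g = F e + F f + \sum_(g | g \notin [set e; f]) F g.
Proof.
move=> nef; rewrite (bigD1 e) //= (bigD1 f) /=; last by rewrite eq_sym.
rewrite addnA; congr (_ + _); apply: eq_bigl => g; by rewrite !inE negb_or.
Qed.

Lemma cut_bridge (X : {set V}) h :
  ((ends h).1 \in X) != ((ends h).2 \in X) ->
  (forall x, x != h -> ((ends x).1 \in X) = ((ends x).2 \in X)) -> bridge ends h.
Proof.
move=> Hh Hx; exists (ends h).1, (ends h).2; split.
  apply: connect1; apply/existsP; exists h; by rewrite inE /= -surjective_pairing eqxx.
have cl : closed (adj_minus ends [set h]) X.
  move=> x y /existsP[x' /andP[]]; rewrite inE => nx' /orP[] /eqP Ex;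
    by have := Hx x' nx'; rewrite Ex.
apply/negP => Hc; move: Hh; by rewrite (closed_connect cl Hc) eqxx.
Qed.

Lemma noloop : cubic ends -> bridgeless ends -> forall g, ~~ is_loop ends g.
Proof.
move=> cub bl g; apply/negP => /eqP lg.
set v := (ends g).1.
set A1 := [set h | (ends h).1 == v]; set A2 := [set h | (ends h).2 == v].
have d3 : #|A1| + #|A2| = 3 by have := cub v; rewrite /degree.
have gA1 : g \in A1 by rewrite inE.
have gA2 : g \in A2 by rewrite inE -lg.
have cUI := cardsUI A1 A2.
have sIU : #|A1 :&: A2| <= #|A1 :|: A2|.
  by apply: subset_leq_card; apply/subsetP => x; rewrite !inE => /andP[->].
have gU : g \in A1 :|: A2 by rewrite inE gA1.
have gI : g \in A1 :&: A2 by rewrite inE gA1.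
have : 0 < #|(A1 :|: A2) :\ g|.
  move: (cardsD1 g (A1 :|: A2)); rewrite gU; lia.
case/card_gt0P => h; rewrite in_setD1 => /andP[nhg hU].
have hI : h \notin A1 :&: A2.
  apply/negP => hI; have := card_ge2 gI hI; rewrite eq_sym nhg => /(_ isT); lia.
have only : forall x, x \in A1 :|: A2 -> x != h -> x = g.
  move=> x xU nxh; apply/eqP; apply/negPn/negP => nxg.
  have := card_ge3 gU hU xU; rewrite eq_sym nhg eq_sym nxg eq_sym nxh.
  move=> /(_ isT isT isT).
  have : 0 < #|A1 :&: A2| by apply/card_gt0P; exists g.
  lia.
apply: (bl h); apply: (cut_bridge (X := [set v])).
  move: hU hI; rewrite !inE; by case: ((ends h).1 == v); case: ((ends h).2 == v).
move=> x nxh; rewrite !inE.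
case Hx: (((ends x).1 == v) || ((ends x).2 == v)).
  have xg : x = g by apply: (only x _ nxh); rewrite !inE Hx.
  by rewrite xg -lg.
by move/norP: Hx => [/negbTE -> /negbTE ->].
Qed.

End Graph.

Section Core.
Variables (V E : finType) (ends : E -> V * V).
Variables (cub : cubic ends) (bl : bridgeless ends) (e f : E) (nef : e != f) (c : V -> bool).
Hypothesis hc : forall g, g \notin [set e; f] -> c (ends g).1 != c (ends g).2.
Hypotheses (ce1 : c (ends e).1) (ce2 : c (ends e).2).
Hypotheses (cf1 : ~~ c (ends f).1) (cf2 : ~~ c (ends f).2).

Definition aend g := if c (ends g).1 then (ends g).1 else (ends g).2.
Definition bend g := if c (ends g).1 then (ends g).2 else (ends g).1.

Lemma incAB g v : incident ends g v = (aend g == v) || (bend g == v).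
Proof. by rewrite /incident /aend /bend; case: (c _); rewrite // orbC. Qed.

Lemma sumAB (X : {set V}) g :
  ((ends g).1 \in X) + ((ends g).2 \in X) = (aend g \in X) + (bend g \in X).
Proof. by rewrite /aend /bend; case: (c _); rewrite // addnC. Qed.

Lemma eqAB (X : {set V}) g :
  (((ends g).1 \in X) == ((ends g).2 \in X)) = ((aend g \in X) == (bend g \in X)).
Proof. by rewrite /aend /bend; case: (c _); rewrite // eq_sym. Qed.

Lemma cAB g : g \notin [set e; f] -> c (aend g) /\ ~~ c (bend g).
Proof.
move=> /hc H; rewrite /aend /bend; case E1: (c (ends g).1) => /=; rewrite ?E1;
  move: H; rewrite E1; by case: (c (ends g).2).
Qed.

Lemma core : three_edge_colourable ends.
Proof.
have nl := noloop cub bl.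
have a12 : (ends e).1 != (ends e).2 by have := nl e.
have b12 : (ends f).1 != (ends f).2 by have := nl f.
set A := [set v | c v]; set B := [set v | ~~ c v].
have szAB : #|A| = #|B|.
  have hA := cubic_sum A cub; have hB := cubic_sum B cub.
  rewrite (sum_split_ef _ nef) in hA; rewrite (sum_split_ef _ nef) in hB.
  have Hrest : \sum_(g | g \notin [set e;f]) (((ends g).1 \in A) + ((ends g).2 \in A)) =
      \sum_(g | g \notin [set e;f]) (((ends g).1 \in B) + ((ends g).2 \in B)).
    apply: eq_bigr => g /hc; rewrite !inE; by case: (c (ends g).1); case: (c (ends g).2).
  move: hA hB; rewrite Hrest !inE ce1 ce2 (negbTE cf1) (negbTE cf2) /=; lia.
set Pa := [set (ends e).1; (ends e).2]; set Pb := [set (ends f).1; (ends f).2].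
set SA := A :\: Pa; set B' := B :\: Pb.
have szSA : #|SA| + 2 = #|A|.
  rewrite cardsD (setIidPr _); last by apply/subsetP => v; rewrite !inE => /orP[]/eqP->.
  rewrite cards2 a12.
  have : 2 <= #|A|.
    apply: (@card_ge2 _ _ (ends e).1 (ends e).2) => //; by rewrite inE.
  lia.
have szB' : #|B'| + 2 = #|B|.
  rewrite cardsD (setIidPr _); last by apply/subsetP => v; rewrite !inE => /orP[]/eqP->.
  rewrite cards2 b12.
  have : 2 <= #|B|.
    apply: (@card_ge2 _ _ (ends f).1 (ends f).2) => //; by rewrite inE.
  lia.
pose r a b := [exists g, [&& g \notin [set e; f], aend g == a, bend g == b & b \in B']].
have hallC : forall S : {set V}, S \subset SA -> #|S| <= #|nbh r S|.
  move=> S sS; rewrite leqNgt; apply/negP => Hlt.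
  set T := nbh r S.
  have TB' : forall b, b \in T -> b \in B'.
    by move=> b; rewrite inE => /existsP[a /andP[_ /existsP[g /and4P[_ _ _ ->]]]].
  set Y := T :|: Pb; set X := S :|: Y.
  have memS : forall v, v \in S -> c v && (v \notin Pa).
    move=> v /(subsetP sS); rewrite !inE; by case/andP => -> ->.
  have memY : forall v, v \in Y -> ~~ c v.
    move=> v; rewrite in_setU => /orP[/TB'|]; first by rewrite !inE => /andP[].
    by rewrite !inE => /orP[]/eqP->.
  have szY : #|Y| = #|T| + 2.
    rewrite cardsU cards2 b12.
    have -> : T :&: Pb = set0.
      apply/setP => v; rewrite in_setI in_set0; apply/negbTE; apply/andP => [[vT vP]].
      by move: (TB' v vT); rewrite in_setD vP.
    by rewrite cards0 subn0.
  have key : forall g, g \notin [set e; f] -> aend g \in S -> bend g \in Y.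
    move=> g gG aS; rewrite in_setU; case Hb: (bend g \in Pb); first by rewrite orbT.
    apply/orP; left; rewrite inE; apply/existsP; exists (aend g); rewrite aS /=.
    apply/existsP; exists g; rewrite gG !eqxx /= in_setD Hb /= inE.
    by case: (cAB gG).
  have memX : forall v, (v \in X) = if c v then v \in S else v \in Y.
    move=> v; rewrite in_setU; case cv: (c v).
      by case vY: (v \in Y); rewrite ?orbF //; move: (memY v vY); rewrite cv.
    by case vS: (v \in S); rewrite //=; move: (memS v vS); rewrite cv.
  have cntS : 3 * #|S| = \sum_(g | g \notin [set e; f]) (aend g \in S : nat).
    rewrite -(cubic_sum S cub) (sum_split_ef _ nef).
    have -> : ((ends e).1 \in S) = false.
      by apply: negbTE; apply/negP => /memS; rewrite !inE eqxx /= andbF.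
    have -> : ((ends e).2 \in S) = false.
      by apply: negbTE; apply/negP => /memS; rewrite !inE eqxx orbT andbF.
    have -> : ((ends f).1 \in S) = false.
      by apply: negbTE; apply/negP => /memS; rewrite (negbTE cf1).
    have -> : ((ends f).2 \in S) = false.
      by apply: negbTE; apply/negP => /memS; rewrite (negbTE cf2).
    rewrite /= !add0n; apply: eq_bigr => g gG; rewrite sumAB.
    have [_ /negbTE cb] := cAB gG.
    have -> : (bend g \in S) = false.
      by apply: negbTE; apply/negP => /memS; rewrite cb.
    by rewrite addn0.
  have cntY : 3 * #|Y| = 2 + \sum_(g | g \notin [set e; f]) (bend g \in Y : nat).
    rewrite -(cubic_sum Y cub) (sum_split_ef _ nef).
    have -> : ((ends e).1 \in Y) = false.
      by apply: negbTE; apply/negP => /memY; rewrite ce1.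
    have -> : ((ends e).2 \in Y) = false.
      by apply: negbTE; apply/negP => /memY; rewrite ce2.
    have -> : ((ends f).1 \in Y) by rewrite !inE eqxx orbT.
    have -> : ((ends f).2 \in Y) by rewrite !inE eqxx !orbT.
    congr (_ + _); apply: eq_bigr => g gG; rewrite sumAB.
    have [ca _] := cAB gG.
    have -> : (aend g \in Y) = false.
      by apply: negbTE; apply/negP => /memY; rewrite ca.
    by rewrite add0n.
  set Cr := [set g | (g \notin [set e; f]) && ((bend g \in Y) && (aend g \notin S))].
  have cntCr : \sum_(g | g \notin [set e; f]) (bend g \in Y : nat) =
      \sum_(g | g \notin [set e; f]) (aend g \in S : nat) + #|Cr|.
    rewrite card_set_sum2 -big_split /=; apply: eq_bigr => g gG.
    case aS: (aend g \in S); last by rewrite add0n andbT.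
    by rewrite (key g gG aS) andbF.
  have HltT : #|T| < #|S| by exact: Hlt.
  have : #|Cr| == 1 by apply/eqP; lia.
  case/cards1P => h Crh.
  have hCr : h \in Cr by rewrite Crh inE.
  move: (hCr); rewrite inE => /and3P[hG hY hS].
  suff : bridge ends h by exact: (@bl h).
  apply: (cut_bridge (X := X)).
    rewrite eqAB memX (proj1 (cAB hG)) memX (negbTE (proj2 (cAB hG))).
    by rewrite (negbTE hS) hY.
  move=> x nxh; apply/eqP; rewrite eqAB.
  case xG: (x \in [set e; f]).
    move: xG; rewrite in_set2 => /orP[]/eqP->.
      rewrite /aend /bend ce1 !memX ce1 ce2.
      have -> : ((ends e).1 \in S) = false.
        by apply: negbTE; apply/negP => /memS; rewrite !inE eqxx /= andbF.
      have -> : ((ends e).2 \in S) = false.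
        by apply: negbTE; apply/negP => /memS; rewrite !inE eqxx orbT andbF.
      by [].
    rewrite /aend /bend (negbTE cf1) !memX (negbTE cf1) (negbTE cf2).
    by rewrite !inE !eqxx !orbT.
  have xG' : x \notin [set e; f] by rewrite xG.
  have [ca cb] := cAB xG'.
  rewrite !memX ca (negbTE cb).
  case aS: (aend x \in S); first by rewrite (key x xG' aS).
  case bY: (bend x \in Y) => //.
  have : x \in Cr by rewrite inE xG' bY aS.
  by rewrite Crh inE (negbTE nxh).
have [fm [finj fr]] := hall_gen (ends e).1 (n := #|SA|) (r := r) (leqnn _) hallC.
have fmB : forall a, a \in SA -> fm a \in B'.
  by move=> a /fr /existsP[g /and4P[_ _ /eqP <- ->]].
have imB : fm @: SA = B'.
  apply/eqP; rewrite eqEcard; apply/andP; split.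
    by apply/subsetP => b /imsetP[a aS ->]; apply: fmB.
  rewrite card_in_imset //; lia.
pose m a := odflt e [pick g | [&& g \notin [set e; f], aend g == a & bend g == fm a]].
have mspec : forall a, a \in SA ->
    [/\ m a \notin [set e; f], aend (m a) = a & bend (m a) = fm a].
  move=> a aS; rewrite /m; case: pickP => [g /and3P[g1 /eqP g2 /eqP g3] | H] //=.
  have := fr a aS; case/existsP => g /and4P[g1 g2 g3 _].
  by move: (H g); rewrite /= g1 g2 g3.
pose M := [set e; f] :|: m @: SA.
have Mkey : forall g v, g \in M -> incident ends g v ->
    if c v then (if v \in Pa then g = e else g = m v)
    else (if v \in Pb then g = f else exists2 a, a \in SA & (fm a = v /\ g = m a)).
  move=> g v; rewrite in_setU in_set2 => /orP[/orP[]/eqP->|/imsetP[a aS ->]].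
  - rewrite /incident => /orP[]/eqP <-; rewrite ?ce1 ?ce2 !inE eqxx ?orbT //.
  - rewrite /incident => /orP[]/eqP <-; rewrite ?(negbTE cf1) ?(negbTE cf2) !inE eqxx ?orbT //.
  - have [m1 m2 m3] := mspec a aS.
    rewrite incAB m2 m3 => /orP[]/eqP <-.
      move: aS; rewrite in_setD => /andP[/negbTE aP]; rewrite inE => ->.
      by rewrite aP.
    have := fmB a aS; rewrite in_setD => /andP[/negbTE bP]; rewrite inE => /negbTE ->.
    by rewrite bP; exists a.
have Muniq : forall g g' v, g \in M -> g' \in M -> incident ends g v ->
    incident ends g' v -> g = g'.
  move=> g g' v gM g'M gv g'v.
  have := Mkey g v gM gv; have := Mkey g' v g'M g'v.
  case: (c v); first by case: (v \in Pa) => ->->.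
  case: (v \in Pb); first by move=> ->->.
  move=> [a' a'S [fa' ->]] [a aS [fa ->]].
  by rewrite (finj a a' aS a'S) // fa fa'.
have Mcover : forall v, exists2 g, g \in M & incident ends g v.
  move=> v; case cv: (c v).
    case vP: (v \in Pa).
      exists e; first by rewrite !inE eqxx.
      by move: vP; rewrite /incident in_set2 eq_sym orbC eq_sym orbC.
    have vS : v \in SA by rewrite in_setD vP inE cv.
    have [m1 m2 m3] := mspec v vS.
    exists (m v); first by rewrite in_setU; apply/orP; right; apply: imset_f.
    by rewrite incAB m2 eqxx.
  case vP: (v \in Pb).
    exists f; first by rewrite !inE eqxx orbT.
    by move: vP; rewrite /incident in_set2 eq_sym orbC eq_sym orbC.
  have : v \in B' by rewrite in_setD vP inE cv.
  rewrite -imB => /imsetP[a aS ->].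
  have [m1 m2 m3] := mspec a aS.
  exists (m a); first by rewrite in_setU; apply/orP; right; apply: imset_f.
  by rewrite incAB m3 eqxx orbT.
set F := ~: M.
have efM : forall g, g \in F -> g \notin [set e; f].
  move=> g; rewrite in_setC; apply: contra => H; by rewrite /M in_setU H.
have [colF prF] : exists col : E -> 'I_2, proper_on ends F col.
  apply: (@konig _ _ ends c 1 #|F| F (leqnn _)).
    by move=> g /efM /hc.
  move=> v; have [gM gMM gMv] := Mcover v.
  have : #|[set g in F | incident ends g v]| <= #|[set g | incident ends g v] :\ gM|.
    apply: subset_leq_card; apply/subsetP => g; rewrite !inE => /andP[gF ->].
    rewrite andbT; apply/negP => /eqP Eg; move: gF gMM; rewrite Eg !inE => /negP H1 H2; exact: H1 H2.
  have := card_incident ends v; rewrite cub.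
  have := cardsD1 gM [set g | incident ends g v]; rewrite inE gMv.
  lia.
exists (fun g => if g \in M then (inord 2 : 'I_3) else inord (colF g)); split.
  exact: nl.
move=> g h v ngh gv hv.
have ltF : forall x, (colF x : nat) < 3 by move=> x; apply: (leq_trans (ltn_ord _)).
case gM: (g \in M); case hM: (h \in M).
- by move: ngh; rewrite (Muniq g h v gM hM gv hv) eqxx.
- apply/eqP => /(congr1 (@nat_of_ord 3)); rewrite !inordK //.
  by move=> H; have := ltn_ord (colF h); rewrite -H.
- apply/eqP => /(congr1 (@nat_of_ord 3)); rewrite !inordK //.
  by move=> H; have := ltn_ord (colF g); rewrite H.
- have gF : g \in F by rewrite /F in_setC gM.
  have hF : h \in F by rewrite /F in_setC hM.
  have := prF g h v gF hF ngh gv hv.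
  apply: contra => /eqP /(congr1 (@nat_of_ord 3)); rewrite !inordK // => H.
  by apply/eqP; apply: val_inj.
Qed.
End Core.

Theorem theorem4p4 (V E : finType) (ends : E -> V * V) :
  cubic ends -> almost_bipartite ends -> three_edge_colourable ends.
Proof.
move=> cub [bl nbip [e [f [nef [c hc]]]]].
have hA := cubic_sum [set v | c v] cub; have hB := cubic_sum [set v | ~~ c v] cub.
rewrite (sum_split_ef _ nef) in hA; rewrite (sum_split_ef _ nef) in hB.
have Hrest : \sum_(g | g \notin [set e;f]) (((ends g).1 \in [set v | c v]) + ((ends g).2 \in [set v | c v])) =
    \sum_(g | g \notin [set e;f]) (((ends g).1 \in [set v | ~~ c v]) + ((ends g).2 \in [set v | ~~ c v])).
  apply: eq_bigr => g /hc; rewrite !inE; by case: (c (ends g).1); case: (c (ends g).2).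
have key : [|| [&& c (ends e).1, c (ends e).2, ~~ c (ends f).1 & ~~ c (ends f).2],
    [&& ~~ c (ends e).1, ~~ c (ends e).2, c (ends f).1 & c (ends f).2] |
    (c (ends e).1 != c (ends e).2) && (c (ends f).1 != c (ends f).2)].
  move: hA hB; rewrite Hrest !inE.
  case Ee1: (c (ends e).1); case Ee2: (c (ends e).2);
    case Ef1: (c (ends f).1); case Ef2: (c (ends f).2) => /= hA hB; try done; lia.
case/or3P: key => [/and4P[ce1 ce2 cf1 cf2]|/and4P[ce1 ce2 cf1 cf2]|/andP[de df]].
- exact: (@core V E ends cub bl e f nef c hc ce1 ce2 cf1 cf2).
- have hc' : forall g, g \notin [set e; f] -> ~~ c (ends g).1 != ~~ c (ends g).2.
    by move=> g /hc; case: (c (ends g).1); case: (c (ends g).2).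
  have cf1' : ~~ ~~ c (ends f).1 by rewrite negbK.
  have cf2' : ~~ ~~ c (ends f).2 by rewrite negbK.
  exact: (@core V E ends cub bl e f nef (fun v => ~~ c v) hc' ce1 ce2 cf1' cf2').
- case: nbip; exists c => g _.
  case: (boolP (g \in [set e; f])) => [|/hc//].
  by rewrite !inE => /orP[]/eqP->.
Qed.
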